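(* Let $R$ be a Noetherian ring and $\{F_\lambda\}_{\lambda\in\Lambda}$ a direct system (over a directed set $\Lambda$) of $R$-linear covariant functors from finitely generated $R$-modules to finitely generated $R$-modules. Let $F=\varinjlim_\lambda F_\lambda$ (computed objectwise, $F(N)=\varinjlim_\lambda F_\lambda(N)$), with canonical natural transformations $T_\lambda\colon F_\lambda\to F$. If $F$ takes values in finitely generated $R$-modules and is finitely generated, then $F=\operatorname{im}T_{\lambda_0}$ for some $\lambda_0\in\Lambda$. In particular, if every $T_\lambda$ is injective, then $T_\lambda\colon F_\lambda\to F$ is an isomorphism for all $\lambda\ge\lambda_0$.
   Context: For an $R$-module $X$, $h_X=\operatorname{Hom}_R(X,-)$. An $R$-linear functor $F$ from finitely generated $R$-modules to themselves is finitely generated if there is a finitely generated $R$-module $M$ and a surjective natural transformation $h_M\to F$. *)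

(* Defs.v *)
From HB Require Import structures.
From mathcomp Require Import all_boot all_order all_algebra.
Set Implicit Arguments. Unset Strict Implicit. Unset Printing Implicit Defensive.
Import GRing.Theory.
Local Open Scope ring_scope.

Definition is_ideal (R : comPzRingType) (I : R -> Prop) : Prop :=
  [/\ I 0, (forall x y, I x -> I y -> I (x + y)) & (forall a x, I x -> I (a * x))].

Definition ideal_fg (R : comPzRingType) (I : R -> Prop) : Prop :=
  exists s : seq R, (forall x, x \in s -> I x) /\
    (forall x, I x -> exists c : 'I_(size s) -> R, x = \sum_(i < size s) c i * s`_i).

Definition noetherian (R : comPzRingType) : Prop :=
  forall I : R -> Prop, is_ideal I -> ideal_fg I.

Definition fin_gen_mod (R : comPzRingType) (M : lmodType R) : Prop :=
  exists s : seq M,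
    forall x : M, exists c : 'I_(size s) -> R, x = \sum_(i < size s) c i *: s`_i.

Record fgmod (R : comPzRingType) := FGMod {
  fgcar :> lmodType R;
  fgcarP : fin_gen_mod fgcar }.

Record rfunctor (R : comPzRingType) := RFunctor {
  fobj : fgmod R -> fgmod R;
  fmap : forall M N : fgmod R, {linear M -> N} -> {linear fobj M -> fobj N};
  fmap_id : forall (M : fgmod R) (f : {linear M -> M}),
      (forall x, f x = x) -> forall y, fmap f y = y;
  fmap_comp : forall (M N P : fgmod R) (f : {linear M -> N}) (g : {linear N -> P})
      (h : {linear M -> P}), (forall x, h x = g (f x)) ->
      forall y, fmap h y = fmap g (fmap f y);
  fmap_lin : forall (M N : fgmod R) (a : R) (f g h : {linear M -> N}),
      (forall x, h x = a *: f x + g x) ->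
      forall y, fmap h y = a *: fmap f y + fmap g y }.

Arguments fmap {R} r {M N} _.
Record natTrans (R : comPzRingType) (F G : rfunctor R) := NatTrans {
  ntc : forall M : fgmod R, fobj F M -> fobj G M;
  ntc_lin : forall M : fgmod R, linear (@ntc M);
  ntc_nat : forall (M N : fgmod R) (f : {linear M -> N}) (x : fobj F M),
      @ntc N (fmap F f x) = fmap G f (@ntc M x) }.

Arguments ntc {R F G} _ M _.

(* a natural transformation h_M = Hom_R(M,-) -> F, described by its
   components Hom_R(M,N) -> F(N) *)
Definition hom_nat (R : comPzRingType) (M : fgmod R) (F : rfunctor R)
    (eta : forall N : fgmod R, {linear M -> N} -> fobj F N) : Prop :=
  (forall (N : fgmod R) (a : R) (f g h : {linear M -> N}),
      (forall x, h x = a *: f x + g x) -> eta N h = a *: eta N f + eta N g) /\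
  (forall (N N' : fgmod R) (g : {linear N -> N'}) (f : {linear M -> N})
      (h : {linear M -> N'}), (forall x, h x = g (f x)) ->
      eta N' h = fmap F g (eta N f)).

Definition fg_functor (R : comPzRingType) (F : rfunctor R) : Prop :=
  exists (M : fgmod R) (eta : forall N : fgmod R, {linear M -> N} -> fobj F N),
    hom_nat eta /\ forall (N : fgmod R) (y : fobj F N), exists f, eta N f = y.

Definition directed (L : Type) (le : L -> L -> Prop) : Prop :=
  [/\ inhabited L, (forall i, le i i),
      (forall i j k, le i j -> le j k -> le i k)
    & (forall i j, exists k, le i k /\ le j k)].

Definition direct_system (R : comPzRingType) (L : Type) (le : L -> L -> Prop)
    (Fs : L -> rfunctor R) (phi : forall i j, le i j -> natTrans (Fs i) (Fs j)) : Prop :=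
  (forall i (h : le i i) N x, ntc (phi i i h) N x = x) /\
  (forall i j k (hij : le i j) (hjk : le j k) (hik : le i k) N x,
      ntc (phi i k hik) N x = ntc (phi j k hjk) N (ntc (phi i j hij) N x)).

(* (F, T) is the objectwise colimit of the direct system: T is a compatible
   cocone and, for each N, (F N, T_i N) is a colimit in R-modules. *)
Definition is_colimit (R : comPzRingType) (L : Type) (le : L -> L -> Prop)
    (Fs : L -> rfunctor R) (phi : forall i j, le i j -> natTrans (Fs i) (Fs j))
    (F : rfunctor R) (T : forall i, natTrans (Fs i) F) : Prop :=
  (forall i j (h : le i j) N x, ntc (T j) N (ntc (phi i j h) N x) = ntc (T i) N x) /\
  (forall (N : fgmod R) (X : lmodType R) (g : forall i, fobj (Fs i) N -> X),
      (forall i, linear (g i)) ->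
      (forall i j (h : le i j) x, g j (ntc (phi i j h) N x) = g i x) ->
      exists! u : fobj F N -> X, linear u /\ forall i x, u (ntc (T i) N x) = g i x).

(* Main.v *)
From HB Require Import structures.
From mathcomp Require Import all_boot all_order all_algebra.
From mathcomp Require Import boolp.
Require Import Defs.
Set Implicit Arguments. Unset Strict Implicit. Unset Printing Implicit Defensive.
Import GRing.Theory.
Local Open Scope ring_scope.
Local Open Scope quotient_scope.

Definition subm (R : pzRingType) (V : lmodType R) (P : V -> Prop) :=
  [/\ P 0, (forall x y, P x -> P y -> P (x + y)) & (forall a x, P x -> P (a *: x))].

Definition erel (R : pzRingType) (V : lmodType R) (P : V -> Prop) : rel V :=
  fun x y => `[< P (x - y) >].

Lemma erel_equiv (R : pzRingType) (V : lmodType R) (P : V -> Prop) (HP : subm P) :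
  equiv_class_of (erel P).
Proof.
case: HP => P0 PD PZ; split.
- by move=> x; apply/asboolP; rewrite subrr.
- move=> x y; apply/asboolP/asboolP => H; have := PZ (-1) _ H;
  by rewrite scaleN1r opprB.
- move=> y x z /asboolP H1 /asboolP H2; apply/asboolP.
  by have := PD _ _ H1 H2; rewrite addrA subrK.
Qed.

Definition eqv (R : pzRingType) (V : lmodType R) (P : V -> Prop) (HP : subm P) :
  equiv_rel V := EquivRelPack (erel_equiv HP).

Definition QT (R : pzRingType) (V : lmodType R) (P : V -> Prop) (HP : subm P) :=
  {eq_quot (eqv HP)}.

Lemma QTeq (R : pzRingType) (V : lmodType R) (P : V -> Prop) (HP : subm P) (x y : V) :
  (\pi_(QT HP) x = \pi_(QT HP) y) <-> P (x - y).
Proof.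
split; first by move/eqmodP => /asboolP.
by move=> H; apply/eqmodP; apply/asboolP.
Qed.

Definition qz (R : pzRingType) (V : lmodType R) (P : V -> Prop) (HP : subm P) : QT HP := \pi_(QT HP) (0 : V).
Arguments qz {R V P} HP.
Definition qadd (R : pzRingType) (V : lmodType R) (P : V -> Prop) (HP : subm P) (a b : QT HP) : QT HP := \pi_(QT HP) (repr a + repr b : V).
Definition qopp (R : pzRingType) (V : lmodType R) (P : V -> Prop) (HP : subm P) (a : QT HP) : QT HP := \pi_(QT HP) (- repr a : V).
Definition qscale (R : pzRingType) (V : lmodType R) (P : V -> Prop) (HP : subm P) (r : R) (a : QT HP) : QT HP := \pi_(QT HP) (r *: repr a : V).

Lemma reprP (R : pzRingType) (V : lmodType R) (P : V -> Prop) (HP : subm P) (x : V) :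
  P (repr (\pi_(QT HP) x) - x).
Proof. by apply/QTeq; rewrite reprK. Qed.

Lemma qW (R : pzRingType) (V : lmodType R) (P : V -> Prop) (HP : subm P)
  (Pr : QT HP -> Prop) : (forall x : V, Pr (\pi_(QT HP) x)) -> forall a, Pr a.
Proof. by move=> H a; rewrite -(reprK a); apply: H. Qed.

Lemma qaddE (R : pzRingType) (V : lmodType R) (P : V -> Prop) (HP : subm P) (x y : V) :
  qadd (\pi_(QT HP) x) (\pi_(QT HP) y) = \pi_(QT HP) (x + y).
Proof.
apply/QTeq; have [P0 PD PZ] := HP.
by rewrite opprD addrACA; apply: PD; apply: reprP.
Qed.

Lemma qoppE (R : pzRingType) (V : lmodType R) (P : V -> Prop) (HP : subm P) (x : V) :
  qopp (\pi_(QT HP) x) = \pi_(QT HP) (- x).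
Proof.
apply/QTeq; have [P0 PD PZ] := HP.
have := PZ (-1) _ (reprP HP x).
by rewrite scaleN1r opprB addrC opprK.
Qed.

Lemma qscaleE (R : pzRingType) (V : lmodType R) (P : V -> Prop) (HP : subm P) r (x : V) :
  qscale r (\pi_(QT HP) x) = \pi_(QT HP) (r *: x).
Proof.
apply/QTeq; have [P0 PD PZ] := HP.
by rewrite -scalerBr; apply: PZ; apply: reprP.
Qed.

Lemma qaddA (R : pzRingType) (V : lmodType R) (P : V -> Prop) (HP : subm P) : associative (@qadd R V P HP).
Proof.
move=> a b c; elim/qW: a => x; elim/qW: b => y; elim/qW: c => z.
by rewrite !qaddE addrA.
Qed.
Lemma qaddC (R : pzRingType) (V : lmodType R) (P : V -> Prop) (HP : subm P) : commutative (@qadd R V P HP).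
Proof. by move=> a b; elim/qW: a => x; elim/qW: b => y; rewrite !qaddE addrC. Qed.
Lemma qadd0 (R : pzRingType) (V : lmodType R) (P : V -> Prop) (HP : subm P) : left_id (qz HP) (@qadd R V P HP).
Proof. by move=> a; elim/qW: a => x; rewrite /qz qaddE add0r. Qed.
Lemma qaddN (R : pzRingType) (V : lmodType R) (P : V -> Prop) (HP : subm P) : left_inverse (qz HP) (@qopp R V P HP) (@qadd R V P HP).
Proof. by move=> a; elim/qW: a => x; rewrite qoppE qaddE addNr. Qed.

HB.instance Definition _ (R : pzRingType) (V : lmodType R) (P : V -> Prop) (HP : subm P) :=
  Choice.on (QT HP).
HB.instance Definition _ (R : pzRingType) (V : lmodType R) (P : V -> Prop) (HP : subm P) := GRing.isZmodule.Build (@QT R V P HP)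
  (@qaddA R V P HP) (@qaddC R V P HP) (@qadd0 R V P HP) (@qaddN R V P HP).

Lemma qplusE (R : pzRingType) (V : lmodType R) (P : V -> Prop) (HP : subm P) (a b : QT HP) :
  a + b = qadd a b.
Proof. by []. Qed.

Lemma qscaleA (R : pzRingType) (V : lmodType R) (P : V -> Prop) (HP : subm P) a b (v : @QT R V P HP) : qscale a (qscale b v) = qscale (a * b) v.
Proof. by elim/qW: v => x; rewrite !qscaleE scalerA. Qed.
Lemma qscale1 (R : pzRingType) (V : lmodType R) (P : V -> Prop) (HP : subm P) : left_id 1 (@qscale R V P HP).
Proof. by move=> a; elim/qW: a => x; rewrite qscaleE scale1r. Qed.
Lemma qscaleDr (R : pzRingType) (V : lmodType R) (P : V -> Prop) (HP : subm P) : right_distributive (@qscale R V P HP) +%R.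
Proof.
move=> a u v; elim/qW: u => x; elim/qW: v => y; rewrite !qplusE. by rewrite (qaddE HP) !(qscaleE HP) (qaddE HP) scalerDr.
Qed.
Lemma qscaleDl (R : pzRingType) (V : lmodType R) (P : V -> Prop) (HP : subm P) (v : @QT R V P HP) : {morph (@qscale R V P HP)^~ v: a b / a + b}.
Proof.
by elim/qW: v => x a b; rewrite !qplusE !(qscaleE HP) (qaddE HP) scalerDl.
Qed.

HB.instance Definition _ (R : pzRingType) (V : lmodType R) (P : V -> Prop) (HP : subm P) := GRing.Zmodule_isLmodule.Build R (@QT R V P HP)
  (@qscaleA R V P HP) (@qscale1 R V P HP) (@qscaleDr R V P HP) (@qscaleDl R V P HP).

Lemma pi_linear (R : pzRingType) (V : lmodType R) (P : V -> Prop) (HP : subm P) :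
  linear (\pi_(QT HP) : V -> QT HP).
Proof. by move=> a x y; rewrite /= -(qaddE HP) -(qscaleE HP). Qed.

Lemma pi0 (R : pzRingType) (V : lmodType R) (P : V -> Prop) (HP : subm P) (x : V) :
  (\pi_(QT HP) x = (0 : QT HP)) <-> P x.
Proof. by have := QTeq HP x 0; rewrite subr0. Qed.

Lemma linD (R : pzRingType) (U V : lmodType R) (f : U -> V) :
  linear f -> forall x y, f (x + y) = f x + f y.
Proof. by move=> H x y; have := H 1 x y; rewrite !scale1r. Qed.
Lemma lin0 (R : pzRingType) (U V : lmodType R) (f : U -> V) :
  linear f -> f 0 = 0.
Proof.
move=> H; have h := linD H 0 0; rewrite addr0 in h.
by apply: (addrI (f 0)); rewrite addr0 -h.
Qed.
Lemma linZ (R : pzRingType) (U V : lmodType R) (f : U -> V) :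
  linear f -> forall a x, f (a *: x) = a *: f x.
Proof. by move=> H a x; rewrite -[a *: x]addr0 H lin0 // addr0. Qed.


Lemma colim_union (R : comPzRingType) (L : Type) (le : L -> L -> Prop)
    (Fs : L -> rfunctor R) (phi : forall i j, le i j -> natTrans (Fs i) (Fs j))
    (F : rfunctor R) (T : forall i, natTrans (Fs i) F) :
  directed le -> is_colimit phi T ->
  forall (N : fgmod R) (y : fobj F N), exists i x, ntc (T i) N x = y.
Proof.
move=> [[l] Lrefl Ltrans Ldir] [Tc Tu] N y.
pose S := fun z : fobj F N => exists i x, ntc (T i) N x = z.
have HS : subm S.
  split.
  - by exists l, 0; apply: lin0; apply: ntc_lin.
  - move=> _ _ [i [a <-]] [j [b <-]].
    have [k [hik hjk]] := Ldir i j.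
    exists k, (ntc (phi i k hik) N a + ntc (phi j k hjk) N b).
    by rewrite (linD (@ntc_lin _ _ _ (T k) N)) !Tc.
  - move=> c _ [i [a <-]]; exists i, (c *: a).
    by rewrite (linZ (@ntc_lin _ _ _ (T i) N)).
have zl : forall (U : lmodType R), linear (fun _ : U => (0 : QT HS)).
  by move=> U a x z /=; rewrite scaler0 addr0.
have [u [[ulin uP] uU]] := Tu N (QT HS) (fun i _ => 0)
  (fun i => zl _) (fun i j h x => erefl).
have e1 := uU (\pi_(QT HS)) (conj (pi_linear HS)
  (fun i x => proj2 (pi0 HS _) (ex_intro _ i (ex_intro _ x erefl)))).
have e2 := uU (fun _ => 0) (conj (zl _)
  (fun i x => erefl)).
have : \pi_(QT HS) y = (0 : QT HS) by exact: (congr1 (fun f => f y) (etrans (esym e1) e2)).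
by move/pi0.
Qed.


Theorem corollary3p2 (R : comPzRingType) (L : Type) (le : L -> L -> Prop)
    (Fs : L -> rfunctor R) (phi : forall i j, le i j -> natTrans (Fs i) (Fs j))
    (F : rfunctor R) (T : forall i, natTrans (Fs i) F) :
  noetherian R -> directed le -> direct_system phi -> is_colimit phi T ->
  fg_functor F ->
  exists l0 : L,
    (forall (N : fgmod R) (y : fobj F N), exists x, ntc (T l0) N x = y) /\
    ((forall l (N : fgmod R), injective (ntc (T l) N)) ->
     forall l, le l0 l -> forall N : fgmod R, bijective (ntc (T l) N)).
Proof.
move=> _ Hdir Hds Hcol [M [eta [[etalin etanat] etasurj]]].
pose u0 := eta M (idfun : {linear M -> M}).
have [l0 [x0 Hx0]] := colim_union Hdir Hcol u0.
have surj0 : forall (N : fgmod R) (y : fobj F N), exists x, ntc (T l0) N x = y.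
  move=> N y; have [f <-] := etasurj N y.
  have -> : eta N f = fmap F f u0.
    by apply: etanat => x.
  by exists (fmap (Fs l0) f x0); rewrite ntc_nat Hx0.
exists l0; split => // inj l hl N.
have surj : forall y, exists x, ntc (T l) N x = y.
  move=> y; have [x <-] := surj0 N y.
  exists (ntc (phi l0 l hl) N x); exact: (proj1 Hcol).
pose g y := proj1_sig (cid (surj y)).
have gK : cancel g (ntc (T l) N) by move=> y; rewrite /g; case: cid.
exists g => // x; apply: (inj l N); by rewrite gK.
Qed.
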